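(* Let $I$ be a squarefree monomial ideal of $Q=\Bbbk[x_1,\ldots,x_n]$ and $\mathbb{T}$ the Taylor resolution of $Q/I$ with Gemeda's dg algebra structure. For a variable $x_k$, let $\mathbb{I}_k$ be the subcomplex of $\mathbb{T}$ spanned by the elements $e_V$ and $\partial(e_V)$ for all $V\subseteq G(I)$ such that $V$ contains a monomial divisible by $x_k$. Then $\mathbb{I}_k$ is a dg ideal of $\mathbb{T}$. Moreover, for any set of variables $x_{k_1},\ldots,x_{k_\ell}$, the subcomplex $\mathbb{I}$ spanned by all $e_V$ and $\partial(e_V)$ with $e_V\in\mathbb{I}_{k_r}$ for some $r$ is a dg ideal of $\mathbb{T}$.
   Context: $G(I)$ is the set of minimal monomial generators of $I$ with a fixed total order $<$; $m_U=\mathrm{lcm}(U)$. The Taylor resolution $\mathbb{T}$ has basis $e_U$ ($U\subseteq G(I)$) in degree $|U|$, differential $\partial(e_U)=\sum_{u\in U}(-1)^{|\{v\in U:v<u\}|}\frac{m_U}{m_{U\setminus\{u\}}}e_{U\setminus\{u\}}$, and Gemeda product $e_Ve_W=(-1)^{|\{(v,w)\in V\times W:v>w\}|}\frac{m_Vm_W}{m_{V\cup W}}e_{V\cup W}$ if $V\cap W=\emptyset$, $0$ otherwise. A subcomplex $\mathbb{J}$ of a dg algebra $\mathbb{F}$ is a dg ideal if $\mathbb{F}\mathbb{J}\subseteq\mathbb{J}$. *)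

(* Defs.v *)
From HB Require Import structures.
From mathcomp Require Import all_boot all_algebra.
From mathcomp Require Import mpoly.
Set Implicit Arguments. Unset Strict Implicit. Unset Printing Implicit Defensive.
Import GRing.Theory.
Local Open Scope ring_scope.

(* A squarefree monomial of Q = k[x_0..x_{n-1}] is identified with its support
   S : {set 'I_n}; mono S = prod_{i in S} x_i.
   G(I) = {g 0, ..., g (m-1)}, totally ordered by the index order of 'I_m. *)
Section Taylor.
Variables (k : fieldType) (n m : nat) (g : 'I_m -> {set 'I_n}).

Definition mono (S : {set 'I_n}) : {mpoly k[n]} := \prod_(i in S) 'X_i.

(* support of m_U = lcm(U) *)
Definition cover (U : {set 'I_m}) : {set 'I_n} := \bigcup_(u in U) g u.

(* The Taylor complex: free Q-module on e_U, U subset of G(I). *)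
Definition TT := {ffun {set 'I_m} -> {mpoly k[n]}}.

Definition tbasis (U : {set 'I_m}) : TT := [ffun W => (W == U)%:R].
Definition tscale (c : {mpoly k[n]}) (x : TT) : TT := [ffun W => c * x W].

(* m_U / m_{U \ u} = prod of x_i, i in cover U \ cover (U \ u)  (squarefree) *)
Definition dbasis (U : {set 'I_m}) : TT :=
  \sum_(u in U) tscale ((-1) ^+ #|[set v in U | (v < u)%N]|
                         * mono (cover U :\: cover (U :\ u))) (tbasis (U :\ u)).

Definition tdiff (x : TT) : TT := \sum_U tscale (x U) (dbasis U).

(* Gemeda product on basis: m_V m_W / m_{V u W} = prod of x_i, i in cover V cap cover W *)
Definition bmul (V W : {set 'I_m}) : TT :=
  if [disjoint V & W] then
    tscale ((-1) ^+ #|[set p in setX V W | (p.2 < p.1)%N]|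
             * mono (cover V :&: cover W)) (tbasis (V :|: W))
  else 0.

Definition tmul (x y : TT) : TT := \sum_V \sum_W tscale (x V * y W) (bmul V W).

Definition in_span (P : {set 'I_m} -> Prop) (x : TT) : Prop :=
  exists a b : {set 'I_m} -> {mpoly k[n]},
    (forall V, ~ P V -> a V = 0 /\ b V = 0) /\
    x = \sum_V (tscale (a V) (tbasis V) + tscale (b V) (dbasis V)).

Definition Ik (kk : 'I_n) : TT -> Prop :=
  in_span (fun V => exists2 v, v \in V & kk \in g v).

Definition dg_ideal (J : TT -> Prop) : Prop :=
  [/\ J 0,
      (forall x y, J x -> J y -> J (x + y)),
      (forall c x, J x -> J (tscale c x)),
      (forall x, J x -> J (tdiff x)) &
      (forall t x, J x -> J (tmul t x))].

End Taylor.

(* Main.v *)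
Require Import Defs.
From HB Require Import structures.
From mathcomp Require Import all_boot all_algebra.
From mathcomp Require Import mpoly.
From Stdlib Require Import Classical.
From mathcomp Require Import zify.
Set Implicit Arguments. Unset Strict Implicit. Unset Printing Implicit Defensive.
Import GRing.Theory.
Local Open Scope ring_scope.

Section T.
Variables (k : fieldType) (n m : nat) (g : 'I_m -> {set 'I_n}).
Implicit Types (U V W : {set 'I_m}) (u v w : 'I_m).
Local Notation R := {mpoly k[n]}.
Local Notation T := (TT k n m).
Local Notation mono := (@mono k n).
Local Notation cov := (@Defs.cover n m g).
Local Notation tb := (@tbasis k n m).
Local Notation ts := (@tscale k n m).
Local Notation db := (@dbasis k n m g).
Local Notation td := (@tdiff k n m g).
Local Notation bm := (@bmul k n m g).
Local Notation tm := (@tmul k n m g).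

Lemma tsE c x W : ts c x W = c * x W. Proof. by rewrite ffunE. Qed.
Lemma tbE V W : tb V W = (W == V)%:R. Proof. by rewrite ffunE. Qed.

Lemma tsDr c x y : ts c (x + y) = ts c x + ts c y.
Proof. by apply/ffunP=> W; rewrite !ffunE mulrDr. Qed.
Lemma tsDl c d x : ts (c + d) x = ts c x + ts d x.
Proof. by apply/ffunP=> W; rewrite !ffunE mulrDl. Qed.
Lemma tsN c x : ts (- c) x = - ts c x.
Proof. by apply/ffunP=> W; rewrite !ffunE mulNr. Qed.
Lemma ts0r c : ts c 0 = 0.
Proof. by apply/ffunP=> W; rewrite !ffunE mulr0. Qed.
Lemma ts0l x : ts 0 x = 0.
Proof. by apply/ffunP=> W; rewrite !ffunE mul0r. Qed.
Lemma ts1 x : ts 1 x = x.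
Proof. by apply/ffunP=> W; rewrite !ffunE mul1r. Qed.
Lemma tsA c d x : ts c (ts d x) = ts (c * d) x.
Proof. by apply/ffunP=> W; rewrite !ffunE mulrA. Qed.
Lemma ts_sumr (I : Type) (r : seq I) (P : pred I) c (F : I -> T) :
  ts c (\sum_(i <- r | P i) F i) = \sum_(i <- r | P i) ts c (F i).
Proof. by apply/ffunP=> W; rewrite !ffunE !sum_ffunE mulr_sumr; apply: eq_bigr => i _; rewrite ffunE. Qed.
Lemma ts_suml (I : Type) (r : seq I) (P : pred I) (F : I -> R) x :
  ts (\sum_(i <- r | P i) F i) x = \sum_(i <- r | P i) ts (F i) x.
Proof. by apply/ffunP=> W; rewrite !ffunE !sum_ffunE mulr_suml; apply: eq_bigr => i _; rewrite ffunE. Qed.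

Lemma tdD x y : td (x + y) = td x + td y.
Proof. by rewrite /tdiff -big_split /=; apply: eq_bigr => U _; rewrite ffunE tsDl. Qed.
Lemma tdZ c x : td (ts c x) = ts c (td x).
Proof. by rewrite /tdiff ts_sumr; apply: eq_bigr => U _; rewrite ffunE tsA. Qed.
Lemma td0 : td 0 = 0.
Proof. by rewrite /tdiff big1 // => U _; rewrite ffunE ts0l. Qed.
Lemma td_sum (I : Type) (r : seq I) (P : pred I) (F : I -> T) :
  td (\sum_(i <- r | P i) F i) = \sum_(i <- r | P i) td (F i).
Proof. exact: (big_morph _ tdD td0). Qed.
Lemma td_tb V : td (tb V) = db V.
Proof.
rewrite /tdiff (bigD1 V) //= big1 ?addr0; first by rewrite ffunE eqxx ts1.
by move=> U /negPf UV; rewrite ffunE UV ts0l.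
Qed.

Lemma tmDr t x y : tm t (x + y) = tm t x + tm t y.
Proof.
rewrite /tmul -big_split; apply: eq_bigr => V _; rewrite -big_split; apply: eq_bigr => W _.
by rewrite ffunE mulrDr tsDl.
Qed.
Lemma tmZr t c x : tm t (ts c x) = ts c (tm t x).
Proof.
rewrite /tmul ts_sumr; apply: eq_bigr => V _; rewrite ts_sumr; apply: eq_bigr => W _.
by rewrite ffunE tsA mulrCA.
Qed.
Lemma tm0r t : tm t 0 = 0.
Proof. by rewrite /tmul big1 // => V _; rewrite big1 // => W _; rewrite ffunE mulr0 ts0l. Qed.
Lemma tm_sumr t (I : Type) (r : seq I) (P : pred I) (F : I -> T) :
  tm t (\sum_(i <- r | P i) F i) = \sum_(i <- r | P i) tm t (F i).
Proof. exact: (big_morph _ (tmDr t) (tm0r t)). Qed.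
Lemma tm_tbl W x : tm (tb W) x = \sum_Z ts (x Z) (bm W Z).
Proof.
rewrite /tmul [LHS](bigD1 W) //= [X in _ + X]big1 ?addr0.
  by apply: eq_bigr => Z _; rewrite ffunE eqxx mul1r.
by move=> U /negPf UV; rewrite big1 // => Z _; rewrite !ffunE UV mul0r ts0l.
Qed.
Lemma tm_decl t x : tm t x = \sum_W ts (t W) (tm (tb W) x).
Proof.
under [RHS]eq_bigr => W _ do rewrite tm_tbl ts_sumr.
rewrite /tmul; apply: eq_bigr => V _; apply: eq_bigr => W _; by rewrite tsA.
Qed.
Lemma tm_tb W V : tm (tb W) (tb V) = bm W V.
Proof.
rewrite /tmul [LHS](bigD1 W) //= [X in _ + X]big1 ?addr0.
  rewrite (bigD1 V) //= big1 ?addr0; first by rewrite !ffunE !eqxx mulr1 ts1.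
  by move=> U /negPf UV; rewrite !ffunE UV mulr0 ts0l.
by move=> U /negPf UV; rewrite big1 // => Z _; rewrite !ffunE UV mul0r ts0l.
Qed.

Definition coef (U : {set 'I_m}) (u : 'I_m) : R :=
  (-1) ^+ #|[set v in U | (v < u)%N]| * mono (cov U :\: cov (U :\ u)).
Definition sg2 (V W : {set 'I_m}) : nat := #|[set p in setX V W | (p.2 < p.1)%N]|.

Lemma dbE U : db U = \sum_(u in U) ts (coef U u) (tb (U :\ u)).
Proof. by []. Qed.
Lemma bmE V W : bm V W = if [disjoint V & W] then
   ts ((-1) ^+ sg2 V W * mono (cov V :&: cov W)) (tb (V :|: W)) else 0.
Proof. by []. Qed.

Lemma tm_tb_db W V : tm (tb W) (db V) = \sum_(v in V) ts (coef V v) (bm W (V :\ v)).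
Proof. by rewrite dbE tm_sumr; apply: eq_bigr => v _; rewrite tmZr tm_tb. Qed.

Section Span.
Variable P : {set 'I_m} -> Prop.
Local Notation S := (@in_span k n m g P).

Lemma S0 : S 0.
Proof.
exists (fun _ => 0), (fun _ => 0); split => //.
by rewrite big1 // => V _; rewrite !ts0l addr0.
Qed.

Lemma SD x y : S x -> S y -> S (x + y).
Proof.
move=> [a1 [b1 [H1 ->]]] [a2 [b2 [H2 ->]]].
exists (fun V => a1 V + a2 V), (fun V => b1 V + b2 V); split.
  by move=> V nP; have [-> ->] := H1 V nP; have [-> ->] := H2 V nP; rewrite addr0.
rewrite -big_split; apply: eq_bigr => V _ /=; rewrite !tsDl.
by rewrite addrACA -!addrA; congr (_ + _); rewrite addrCA.
Qed.

Lemma SZ c x : S x -> S (ts c x).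
Proof.
move=> [a [b [H ->]]].
exists (fun V => c * a V), (fun V => c * b V); split.
  by move=> V nP; have [-> ->] := H V nP; rewrite mulr0.
by rewrite ts_sumr; apply: eq_bigr => V _; rewrite tsDr !tsA.
Qed.

Lemma SN x : S x -> S (- x).
Proof.
move=> Sx; have -> : - x = ts (-1) x by apply/ffunP=> W; rewrite !ffunE mulN1r.
exact: SZ.
Qed.

Lemma Ssum (I : Type) (r : seq I) (Pr : pred I) (F : I -> T) :
  (forall i, Pr i -> S (F i)) -> S (\sum_(i <- r | Pr i) F i).
Proof. by move=> H; apply: big_ind => //; [exact: S0 | exact: SD]. Qed.

Lemma Stb V : P V -> S (tb V).
Proof.
move=> PV; exists (fun W => (W == V)%:R), (fun _ => 0); split.
  by move=> W nP; split => //; case: eqP => // WV; subst.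
rewrite (bigD1 V) //= [X in _ + X]big1 ?addr0; first by rewrite eqxx ts1 ts0l addr0.
by move=> W /negPf ->; rewrite !ts0l addr0.
Qed.

Lemma Sdb V : P V -> S (db V).
Proof.
move=> PV; exists (fun _ => 0), (fun W => (W == V)%:R); split.
  by move=> W nP; split => //; case: eqP => // WV; subst.
rewrite (bigD1 V) //= [X in _ + X]big1 ?addr0; first by rewrite eqxx ts1 ts0l add0r.
by move=> W /negPf ->; rewrite !ts0l addr0.
Qed.

Lemma S_ex x : S x -> exists a b : {set 'I_m} -> R,
   (forall V, ~ P V -> a V = 0 /\ b V = 0) /\
   x = \sum_V (ts (a V) (tb V) + ts (b V) (db V)).
Proof. by []. Qed.

End Span.

Definition c1 U x := #|[set v in U | (v < x)%N]|.

Lemma monoU (A B : {set 'I_n}) : [disjoint A & B] -> mono (A :|: B) = mono A * mono B.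
Proof.
move=> dAB; rewrite /Defs.mono -bigU //; apply: eq_bigl => i; by rewrite !inE.
Qed.

Lemma covU (A B : {set 'I_m}) : cov (A :|: B) = cov A :|: cov B.
Proof. exact: bigcup_setU. Qed.

Lemma cov1 u : cov [set u] = g u.
Proof. by rewrite /Defs.cover big_set1. Qed.

Lemma covD1 U u : u \in U -> cov U = g u :|: cov (U :\ u).
Proof. by move=> uU; rewrite -{1}(setD1K uU) covU cov1. Qed.

Lemma covS (A B : {set 'I_m}) : A \subset B -> cov A \subset cov B.
Proof.
move=> sAB; apply/subsetP => i /bigcupP [u uA iu]; apply/bigcupP; exists u => //.
exact: (subsetP sAB).
Qed.

Lemma monoDD (A B C : {set 'I_n}) : C \subset B -> B \subset A ->
  mono (A :\: B) * mono (B :\: C) = mono (A :\: C).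
Proof.
move=> sCB sBA; rewrite -monoU.
  apply: congr1; apply/setP => i; rewrite !inE.
  case iC: (i \in C); first by rewrite (subsetP sCB) //= andbF.
  case iB: (i \in B); first by rewrite (subsetP sBA).
  by rewrite /= orbF.
rewrite -setI_eq0; apply/eqP/setP => i; rewrite !inE; case: (i \in B); by rewrite ?andbF.
Qed.

Lemma c1_lt V u w : (w < u)%N -> c1 (V :\ u) w = c1 V w.
Proof.
move=> wu; rewrite /c1; apply: eq_card => v; rewrite !inE.
case: (eqVneq v u) => [->|] //=; by rewrite ltnNge ltnW ?andbF.
Qed.

Lemma c1_gt V u w : w \in V -> (w < u)%N -> (c1 (V :\ w) u).+1 = c1 V u.
Proof.
move=> wV wu; rewrite /c1 [RHS](cardsD1 w) !inE wV wu add1n; congr _.+1; apply: eq_card => v.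
by rewrite !inE andbA.
Qed.

Lemma coef2 V u w : u \in V -> w \in V :\ u ->
  coef V u * coef (V :\ u) w = (-1) ^+ (c1 V u + c1 (V :\ u) w) * mono (cov V :\: cov (V :\ u :\ w)).
Proof.
move=> uV wVu; rewrite /coef mulrACA -exprD -/(c1 _ _) -/(c1 _ _); congr (_ * _).
by apply: monoDD; apply: covS; apply: subD1set.
Qed.

Lemma setD1C V u w : V :\ u :\ w = V :\ w :\ u.
Proof. by apply/setP => x; rewrite !inE andbCA. Qed.

Lemma sign_anti V u w : u \in V -> w \in V -> u != w ->
  (-1) ^+ (c1 V u + c1 (V :\ u) w) = - (-1) ^+ (c1 V w + c1 (V :\ w) u) :> R.
Proof.
move=> uV wV uw.
have [wu|uw'|e] := ltngtP w u; last by move: uw; rewrite (val_inj e) eqxx.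
  by rewrite c1_lt // -(c1_gt wV wu) addSn exprS mulN1r addnC.
by rewrite [in RHS]c1_lt // -(c1_gt uV uw') addSn exprS mulN1r opprK addnC.
Qed.

Lemma sum_antisym (Z : zmodType) V (f : 'I_m -> 'I_m -> Z) :
  (forall u w, u \in V -> w \in V -> u != w -> f u w = - f w u) ->
  \sum_(u in V) \sum_(w in V :\ u) f u w = 0.
Proof.
move=> Hf; rewrite pair_big_dep /=.
rewrite (bigID (fun p : 'I_m * 'I_m => (p.2 < p.1)%N)) /=.
rewrite [X in _ + X](reindex_inj (h := fun p : 'I_m * 'I_m => (p.2, p.1))); last first.
  by move=> [a b] [c d] /= [-> ->].
rewrite [X in _ + X](eq_bigl (fun p : 'I_m * 'I_m => (p.1 \in V) && (p.2 \in V :\ p.1) && (p.2 < p.1)%N)); last first.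
  move=> [u w] /=; rewrite !inE.
  case: (eqVneq w u) => [->|wu]; first by rewrite !andbF.
  case: (ltngtP u w) => [uw|wu'|e]; last by move: wu; rewrite (val_inj e) eqxx.
    by case: (u \in V); case: (w \in V).
  by case: (u \in V); case: (w \in V).
rewrite -big_split big1 //= => [[u w]] /=; rewrite !inE => /andP [/andP [uV /andP [wu wV]] _].
by rewrite (Hf u w) ?addNr // eq_sym.
Qed.

Lemma d2 V : td (db V) = 0.
Proof.
rewrite dbE td_sum.
under eq_bigr => u _ do rewrite tdZ td_tb dbE ts_sumr.
under eq_bigr => u _ do under eq_bigr => w _ do rewrite tsA.
apply: sum_antisym => u w uV wV uw.
have wVu : w \in V :\ u by rewrite !inE eq_sym uw wV.
have uVw : u \in V :\ w by rewrite !inE uw uV.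
by rewrite coef2 // coef2 // [V :\ w :\ u]setD1C sign_anti // mulNr tsN.
Qed.

Lemma cardE_sum (A : {set 'I_m}) (P : pred 'I_m) :
  #|[set y in A | P y]| = (\sum_(y in A) P y)%N.
Proof.
rewrite -sum1_card (eq_bigl (fun y => (y \in A) && P y)); last by move=> y; rewrite inE.
by rewrite big_mkcondr /=; apply: eq_bigr => y _; case: (P y).
Qed.

Lemma c1E U x : c1 U x = (\sum_(y in U) (y < x))%N.
Proof. exact: cardE_sum. Qed.

Lemma sg2E W V : sg2 W V = (\sum_(w in W) c1 V w)%N.
Proof.
rewrite /sg2 -sum1_card (eq_bigl (fun p : 'I_m * 'I_m => (p.1 \in W) && ((p.2 \in V) && (p.2 < p.1)%N))); last first.
  by move=> [a b]; rewrite !inE andbA.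
rewrite -(pair_big_dep (fun a => a \in W) (fun a b => (b \in V) && (b < a)%N) (fun _ _ => 1%N)) /=.
by apply: eq_bigr => w _; rewrite c1E big_mkcondr; apply: eq_bigr => x _; case: (x < w)%N.
Qed.

Lemma sumnU (F : 'I_m -> nat) W V : [disjoint W & V] ->
  (\sum_(u in W :|: V) F u = \sum_(u in W) F u + \sum_(u in V) F u)%N.
Proof. move=> d; rewrite -bigU //; apply: eq_bigl => u; by rewrite !inE. Qed.

Lemma sumU (F : 'I_m -> T) W V : [disjoint W & V] ->
  \sum_(u in W :|: V) F u = \sum_(u in W) F u + \sum_(u in V) F u.
Proof. move=> d; rewrite -bigU //; apply: eq_bigl => u; by rewrite !inE. Qed.

Lemma C1 W V x : [disjoint W & V] -> c1 (W :|: V) x = (c1 W x + c1 V x)%N.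
Proof. by move=> d; rewrite !c1E sumnU. Qed.

Lemma C2 W V w : w \in W -> sg2 W V = (sg2 (W :\ w) V + c1 V w)%N.
Proof. by move=> wW; rewrite !sg2E (big_setD1 w wW) /= addnC. Qed.

Lemma C3 W V v : v \in V ->
  sg2 W V = (sg2 W (V :\ v) + \sum_(w in W) (v < w))%N.
Proof.
move=> vV; rewrite !sg2E -big_split /=; apply: eq_bigr => w _.
by rewrite !c1E (big_setD1 v vV) /= addnC.
Qed.

Lemma C4 W v : v \notin W -> (c1 W v + \sum_(w in W) (v < w))%N = #|W|.
Proof.
move=> vW; rewrite c1E -big_split -sum1_card /=; apply: eq_bigr => w wW.
have wv : w != v by apply: contraNneq vW => <-.
case: (ltngtP w v) => // e; by move: wv; rewrite (val_inj e) eqxx.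
Qed.

Lemma mono4 (A B C D : {set 'I_n}) : [disjoint A & B] -> [disjoint C & D] ->
  A :|: B = C :|: D -> mono A * mono B = mono C * mono D.
Proof. by move=> dAB dCD E; rewrite -!monoU // E. Qed.

Lemma sgn2 (a b : nat) : (-1) ^+ (a + b.*2) = (-1) ^+ a :> R.
Proof. by rewrite exprD -mul2n exprM sqrrN expr1n expr1n mulr1. Qed.

Ltac sets3 a b c :=
  first [ rewrite -setI_eq0; apply/eqP | idtac ];
  apply/setP; let x := fresh "x" in intro x; rewrite !inE;
  case: (x \in a); case: (x \in b); case: (x \in c).

Lemma leib W V : [disjoint W & V] ->
  \sum_(v in V) ts (coef V v) (bm W (V :\ v)) =
  ts ((-1) ^+ #|W|) (ts ((-1) ^+ sg2 W V * mono (cov W :&: cov V)) (db (W :|: V))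
                     - \sum_(w in W) ts (coef W w) (bm (W :\ w) V)).
Proof.
move=> d.
have nWV : forall v, v \in V -> v \notin W by move=> v vV; rewrite (disjointFl d vV).
have nVW : forall w, w \in W -> w \notin V by move=> w wW; rewrite (disjointFr d wW).
rewrite dbE sumU // (tsDr ((-1) ^+ sg2 W V * _)).
have E : \sum_(w in W) ts (coef W w) (bm (W :\ w) V) =
   ts ((-1) ^+ sg2 W V * mono (cov W :&: cov V))
      (\sum_(w in W) ts (coef (W :|: V) w) (tb ((W :|: V) :\ w))).
  rewrite ts_sumr; apply: eq_bigr => w wW.
  rewrite bmE (_ : [disjoint W :\ w & V]); last by apply: disjointWl d; exact: subD1set.
  have EU : (W :|: V) :\ w = (W :\ w) :|: V.
    apply/setP => x; rewrite !inE; case: (eqVneq x w) => [->|] //=.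
    by rewrite (negPf (nVW w wW)).
  rewrite !tsA EU.
  apply: (congr1 (fun c => ts c _)).
  rewrite /coef -/(c1 W w) -/(c1 (W :|: V) w) EU mulrACA [RHS]mulrACA -!exprD.
  rewrite (C2 _ wW) (C1 _ d).
  rewrite (_ : (sg2 (W :\ w) V + c1 V w + (c1 W w + c1 V w))%N =
               (c1 W w + sg2 (W :\ w) V + (c1 V w).*2)%N); last by rewrite -addnn; lia.
  rewrite sgn2; congr (_ * _).
  rewrite !covU (covD1 wW); apply: mono4.
  - by sets3 (g w) (cov (W :\ w)) (cov V).
  - by sets3 (g w) (cov (W :\ w)) (cov V).
  - by sets3 (g w) (cov (W :\ w)) (cov V).
rewrite E [X in ts _ X]addrAC subrr add0r !ts_sumr; apply: eq_bigr => v vV.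
rewrite bmE (_ : [disjoint W & V :\ v]); last by apply: disjointWr d; exact: subD1set.
have EU : (W :|: V) :\ v = W :|: (V :\ v).
  apply/setP => x; rewrite !inE; case: (eqVneq x v) => [->|] //=.
  by rewrite (negPf (nWV v vV)).
rewrite !tsA EU.
apply: (congr1 (fun c => ts c _)).
rewrite /coef -/(c1 V v) -/(c1 (W :|: V) v) EU mulrACA -[RHS]mulrA [in RHS]mulrACA (mulrA ((-1) ^+ #|W|)) -!exprD.
rewrite (C3 _ vV) (C1 _ d) -(C4 (nWV v vV)).
set z := (\sum_(w in W) (v < w))%N.
rewrite (_ : (c1 W v + z + (sg2 W (V :\ v) + z + (c1 W v + c1 V v)))%N =
             (c1 V v + sg2 W (V :\ v) + (c1 W v + z).*2)%N); last by rewrite -addnn; lia.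
rewrite sgn2; congr (_ * _).
rewrite !covU (covD1 vV); apply: mono4.
- by sets3 (g v) (cov (V :\ v)) (cov W).
- by sets3 (g v) (cov (V :\ v)) (cov W).
- by sets3 (g v) (cov (V :\ v)) (cov W).
Qed.

Section Gen.
Variable P : {set 'I_m} -> Prop.
Hypothesis Hup : forall V V', V \subset V' -> P V -> P V'.
Local Notation S := (@in_span k n m g P).

Lemma S_bm W V : P (W :|: V) -> S (bm W V).
Proof.
move=> PU; rewrite bmE; case: ifP => _; last exact: S0.
by apply: SZ; apply: Stb.
Qed.

Lemma S_tbtb W V : P V -> S (tm (tb W) (tb V)).
Proof. move=> PV; rewrite tm_tb; apply: S_bm; apply: Hup PV; exact: subsetUr. Qed.

Lemma S_tbdb W V : P V -> S (tm (tb W) (db V)).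
Proof.
move=> PV; rewrite tm_tb_db.
have PU : P (W :|: V) by apply: Hup PV; exact: subsetUr.
case: (boolP [disjoint W & V]) => dWV.
  rewrite leib //; apply: SZ; apply: SD; first by apply: SZ; apply: Sdb.
  apply: SN; apply: Ssum => w wW; apply: SZ; apply: S_bm; apply: Hup PV.
  exact: subsetUr.
apply: Ssum => v vV; apply: SZ; rewrite bmE; case: ifP => d; last exact: S0.
apply: SZ; apply: Stb; apply: Hup PV.
have vW : v \in W.
  apply/negPn/negP => vW; move: dWV => /negP; apply.
  rewrite -setI_eq0 in d; rewrite -setI_eq0 -(eqP d); apply/eqP/setP => x; rewrite !inE.
  by case: (eqVneq x v) => [->|]; rewrite ?(negPf vW).
apply/subsetP => x xV; rewrite !inE.
case: (eqVneq x v) => [->|xv]; rewrite ?vW ?xV ?orbT //.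
Qed.

Lemma gen_dg : dg_ideal g S.
Proof.
split; [exact: S0 | exact: SD | exact: SZ | |].
  move=> x [a [b [H ->]]]; rewrite td_sum; apply: Ssum => V _.
  rewrite tdD !tdZ td_tb d2 ts0r addr0.
  have [PV|nPV] := classic (P V); first by apply: SZ; apply: Sdb.
  by have [-> _] := H V nPV; rewrite ts0l; apply: S0.
move=> t x [a [b [H ->]]]; rewrite tm_decl; apply: Ssum => W _; apply: SZ.
rewrite tm_sumr; apply: Ssum => V _; rewrite tmDr !tmZr.
have [PV|nPV] := classic (P V).
  by apply: SD; apply: SZ; [apply: S_tbtb | apply: S_tbdb].
by have [-> ->] := H V nPV; rewrite !ts0l addr0; apply: S0.
Qed.

End Gen.
End T.

Section Char.
Variables (k : fieldType) (n m : nat) (g : 'I_m -> {set 'I_n}).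
Implicit Types (U V W : {set 'I_m}) (u v w : 'I_m).

Lemma mono_ev0 (S : {set 'I_n}) kk : kk \in S -> meval (fun _ => 0 : k) (@mono k n S) = 0.
Proof.
move=> kS; rewrite /mono rmorph_prod (bigD1 kk) //= mevalXU mul0r //.
Qed.

Lemma Ik_char kk V :
  in_span g (fun V => exists2 v, v \in V & kk \in g v) (tbasis k n V) ->
  exists2 v, v \in V & kk \in g v.
Proof.
case: (boolP [exists v in V, kk \in g v]).
  by move=> /existsP [v /andP [vV kv]]; exists v.
move=> nex [a [b [H E]]].
have nP : forall U, (exists2 v, v \in U & kk \in g v) -> U != V.
  move=> U [v vU kv]; apply/eqP => UV; subst U; move/existsP: nex; apply; exists v; exact/andP.
have := congr1 (fun x : TT k n m => meval (fun _ => 0 : k) (x V)) E.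
rewrite ffunE eqxx meval1 sum_ffunE raddf_sum big1; first by move/eqP; rewrite oner_eq0.
move=> W _; rewrite !ffunE raddfD /= !mevalM.
rewrite [X in X + _](_ : _ = 0) ?add0r; last first.
  case: (eqVneq V W) => [WV|WV]; last by rewrite mulr0n meval0 mulr0.
  subst V; have HW : ~ (exists2 v, v \in W & kk \in g v).
    by move=> PV; have := nP W PV; rewrite eqxx.
  by have [-> _] := H W HW; rewrite meval0 mul0r.
have [PW|nPW] := classic (exists2 v, v \in W & kk \in g v); last first.
  by have [_ ->] := H W nPW; rewrite meval0 mul0r.
apply/eqP; rewrite mulf_eq0; apply/orP; right; apply/eqP.
rewrite sum_ffunE raddf_sum big1 // => u uW; rewrite !ffunE /= !mevalM.
case: (eqVneq V (W :\ u)) => [VWu|]; last by rewrite mulr0n meval0 mulr0.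
apply/eqP; rewrite !mulf_eq0 -!orbA; apply/orP; right; apply/orP; left; apply/eqP.
apply: (mono_ev0 (kk := kk)).
case: PW => w wW kw.
have wu : w = u.
  apply/eqP; apply/negPn/negP => wu; move/existsP: nex; apply; exists w.
  by rewrite VWu !inE wu wW kw.
subst w; rewrite !inE; apply/andP; split.
  apply/negP => /bigcupP [v vWu kv]; move/existsP: nex; apply; exists v.
  by rewrite VWu vWu kv.
by apply/bigcupP; exists u.
Qed.
End Char.

Theorem mainTheorem12 (k : fieldType) (n m : nat) (g : 'I_m -> {set 'I_n})
  (Hmin : forall i j : 'I_m, g i \subset g j -> i = j) :
  (forall kk : 'I_n, @dg_ideal k n m g (@Ik k n m g kk)) /\
  (forall K : {set 'I_n},
     @dg_ideal k n m g (@in_span k n m g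
       (fun V => exists2 kk, kk \in K & @Ik k n m g kk (@tbasis k n m V)))).
Proof.
split.
  move=> kk; apply: gen_dg => V V' sVV' [v vV kv]; exists v => //; exact: (subsetP sVV').
move=> K; apply: gen_dg => V V' sVV' [kk kK Hk]; exists kk => //.
have [v vV kv] := Ik_char Hk.
apply: Stb; exists v => //; exact: (subsetP sVV').
Qed.
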